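(* Let $\omega$ be a weight on $\mathbb N^2$, and let $(r_i)$, $(s_i)$ be sequences of positive real numbers such that $$r_{i_1}^{\alpha_1}\cdots r_{i_k}^{\alpha_k}s_{i_1}^{\beta_1}\cdots s_{i_k}^{\beta_k}\le\omega\big(p_{i_1}^{\alpha_1}\cdots p_{i_k}^{\alpha_k},\,p_{i_1}^{\beta_1}\cdots p_{i_k}^{\beta_k}\big)$$ whenever $k\in\mathbb N$, the $p_{i_j}$ are distinct primes and $\alpha_j,\beta_j\in\mathbb N_0$. Then, under the identification of $\Delta(\ell^1(\mathbb N^2,\omega))$ with pairs of complex sequences, $$\prod_{i=1}^\infty\overline{B(0,r_i)}\times\prod_{i=1}^\infty\overline{B(0,s_i)}\subset\Delta(\ell^1(\mathbb N^2,\omega))\subset\prod_{i=1}^\infty\overline{B(0,\rho_i)}\times\prod_{i=1}^\infty\overline{B(0,\mu_i)}.$$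
   Context: $\mathbb N_0=\mathbb N\cup\{0\}$; $p_1<p_2<\cdots$ are the primes in increasing order; $\overline{B(a,r)}=\{z\in\mathbb C:|z-a|\le r\}$. A weight on $\mathbb N^2$ (semigroup under coordinatewise multiplication) is $\omega:\mathbb N^2\to[1,\infty)$ with $\omega(xy)\le\omega(x)\omega(y)$. $\rho_i=\lim_{n\to\infty}\omega(p_i^n,1)^{1/n}=\inf_n\omega(p_i^n,1)^{1/n}$ and $\mu_i=\lim_{n\to\infty}\omega(1,p_i^n)^{1/n}=\inf_n\omega(1,p_i^n)^{1/n}$. $\ell^1(\mathbb N^2,\omega)$ is the weighted convolution algebra $\{a:\sum|a(m,n)|\omega(m,n)<\infty\}$ with $(a\star b)(m,n)=\sum_{u_1u_2=m,v_1v_2=n}a(u_1,v_1)b(u_2,v_2)$. Its Gel'fand space $\Delta(\ell^1(\mathbb N^2,\omega))$ is identified with the set of $\omega$-bounded semicharacters $\chi$ (nonzero multiplicative maps $\mathbb N^2\to\mathbb C$ with $|\chi|\le\omega$), and each such $\chi$ is identified with the pair of sequences $((\chi(p_i,1))_i,(\chi(1,p_i))_i)\in\mathbb C^{\mathbb N}\times\mathbb C^{\mathbb N}$; a pair of sequences lies in $\Delta$ iff the semicharacter it determines is $\omega$-bounded. *)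

(* Defs.v *)
From HB Require Import structures.
From mathcomp Require Import all_boot all_order all_algebra.
From mathcomp Require Import all_classical all_reals.
From mathcomp Require Import exp.
From mathcomp Require Import complex.

Set Implicit Arguments.
Unset Strict Implicit.
Unset Printing Implicit Defensive.

Import Order.TTheory GRing.Theory Num.Theory.
Local Open Scope ring_scope.

(* the least prime > m (searched in (m, m`! + 1], where one always exists) *)
Definition next_prime (m : nat) : nat :=
  (m.+1 + find (fun k => prime (m.+1 + k)) (iota 0 (m`!).+1))%N.

(* nth_prime i = p_i for i >= 1 (nth_prime 0 = 0 is a dummy value):
   p_1 = 2, p_2 = 3, ... *)
Fixpoint nth_prime (i : nat) : nat :=
  match i with
  | 0 => 0%N
  | i'.+1 => next_prime (nth_prime i')
  end.

Definition posN2 (x : nat * nat) : Prop := (0 < x.1)%N /\ (0 < x.2)%N.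

Definition mulN2 (x y : nat * nat) : nat * nat := (x.1 * y.1, x.2 * y.2)%N.

Definition is_weight (R : realType) (omega : nat * nat -> R) : Prop :=
  (forall x, posN2 x -> 1 <= omega x) /\
  (forall x y, posN2 x -> posN2 y -> omega (mulN2 x y) <= omega x * omega y).

Definition is_semicharacter (R : realType) (chi : nat * nat -> R[i]) : Prop :=
  (exists x, posN2 x /\ chi x != 0) /\
  (forall x y, posN2 x -> posN2 y -> chi (mulN2 x y) = chi x * chi y).

Definition omega_bounded (R : realType) (omega : nat * nat -> R)
  (chi : nat * nat -> R[i]) : Prop :=
  forall x, posN2 x -> `|chi x| <= (omega x)%:C%C.

(* Gel'fand space of l^1(N^2, omega), identified with pairs of sequences
   ((chi(p_i,1))_i, (chi(1,p_i))_i) (indices i >= 1 relevant). *)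
Definition Delta (R : realType) (omega : nat * nat -> R)
  : set ((nat -> R[i]) * (nat -> R[i])) :=
  [set ab | exists chi : nat * nat -> R[i],
     [/\ is_semicharacter chi, omega_bounded omega chi,
         forall i, (0 < i)%N -> ab.1 i = chi (nth_prime i, 1%N) &
         forall i, (0 < i)%N -> ab.2 i = chi (1%N, nth_prime i)]].

Definition rho (R : realType) (omega : nat * nat -> R) (i : nat) : R :=
  inf [set omega (nth_prime i ^ n, 1)%N `^ (n%:R)^-1 | n in [set n : nat | (0 < n)%N]].

Definition mu (R : realType) (omega : nat * nat -> R) (i : nat) : R :=
  inf [set omega (1, nth_prime i ^ n)%N `^ (n%:R)^-1 | n in [set n : nat | (0 < n)%N]].

Definition polydisc_pair (R : realType) (r s : nat -> R)
  : set ((nat -> R[i]) * (nat -> R[i])) :=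
  [set ab | (forall i, (0 < i)%N -> `|ab.1 i| <= (r i)%:C%C) /\
            (forall i, (0 < i)%N -> `|ab.2 i| <= (s i)%:C%C)].

(* Main.v *)
Require Import Defs.
From HB Require Import structures.
From mathcomp Require Import all_boot all_order all_algebra.
From mathcomp Require Import all_classical all_reals.
From mathcomp Require Import exp.
From mathcomp Require Import complex.

Import Order.TTheory GRing.Theory Num.Theory.
Local Open Scope ring_scope.
Local Open Scope classical_set_scope.

From mathcomp Require Import zify.


Lemma next_prime_spec m :
  [/\ prime (next_prime m), (m < next_prime m)%N &
      forall q, (m < q < next_prime m)%N -> ~~ prime q].
Proof.
set a := (fun k => prime (m.+1 + k)).
have hh : has a (iota 0 (m`!).+1).
  have /pdivP[p pp pd] : (1 < m`! + 1)%N by rewrite addn1 ltnS fact_gt0.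
  have mp : (m < p)%N.
    rewrite ltnNge; apply: contraL pd => p_le_m.
    by rewrite dvdn_addr ?dvdn_fact ?prime_gt0 // gtnNdvd ?prime_gt1.
  apply/hasP; exists (p - m.+1)%N.
    rewrite mem_iota /= add0n.
    have := dvdn_leq (ltac:(by rewrite addn1) : (0 < m`! + 1)%N) pd.
    rewrite addn1 => h; lia.
  by rewrite /a; have -> : (m.+1 + (p - m.+1))%N = p by lia.
have hf := nth_find 0 hh.
rewrite has_find size_iota in hh.
rewrite /next_prime; split.
- by move: hf; rewrite /a nth_iota.
- lia.
- move=> q /andP[h1 h2]; change (is_true (q < m.+1 + find a (iota 0 (m`!).+1))%N) in h2.
  have hq : (q - m.+1 < find a (iota 0 (m`!).+1))%N by lia.
  have := before_find 0 hq; rewrite /a nth_iota ?add0n; last by lia.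
  have -> : (m.+1 + (0 + (q - m.+1)))%N = q by lia.
  by move=> ->.
Qed.


Lemma nth_prime_prime i : (0 < i)%N -> prime (nth_prime i).
Proof. by case: i => // i _ /=; case: (next_prime_spec (nth_prime i)). Qed.

Lemma nth_prime_ltS i : (nth_prime i < nth_prime i.+1)%N.
Proof. by rewrite /=; case: (next_prime_spec (nth_prime i)). Qed.

Lemma nth_prime_mono i j : (i < j)%N -> (nth_prime i < nth_prime j)%N.
Proof.
elim: j => // j IH; rewrite ltnS leq_eqVlt => /orP[/eqP->|h].
  exact: nth_prime_ltS.
exact: ltn_trans (IH h) (nth_prime_ltS j).
Qed.

Lemma nth_prime_inj : injective nth_prime.
Proof.
move=> i j e; case: (ltngtP i j) => h;
 first [exact: h | by have := nth_prime_mono _ _ h; rewrite e ltnn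
       | by have := nth_prime_mono _ _ h; rewrite -e ltnn].
Qed.

Lemma nth_prime_ge i : (i <= nth_prime i)%N.
Proof. elim: i => // i IH; exact: leq_ltn_trans IH (nth_prime_ltS i). Qed.

Lemma nth_prime_onto p : prime p -> exists i, (0 < i)%N /\ nth_prime i = p.
Proof.
move=> pp.
suff: forall n, (p <= nth_prime n)%N -> exists i, (0 < i)%N /\ nth_prime i = p.
  move=> H; exact: (H p (nth_prime_ge p)).
elim=> [|n IH] /=.
  by rewrite leqn0 => /eqP e; move: pp; rewrite e.
case: (leqP p (nth_prime n)) => [h _|h]; first exact: IH.
case: (next_prime_spec (nth_prime n)) => _ _ H.
rewrite leq_eqVlt => /orP[/eqP e|h2]; first by exists n.+1; split; [exact: ltn0Sn | rewrite /= e].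
by move: (H p); rewrite h h2 pp => /(_ isT).
Qed.

Arguments nth_prime_prime {i}.
Arguments nth_prime_mono {i j}.
Arguments nth_prime_onto {p}.

Opaque next_prime.

Lemma logn_small q m : (m < q)%N -> logn q m = 0%N.
Proof.
move=> h; rewrite lognE; case: (prime q) => //=; case: (posnP m) => [->//|m0].
by rewrite gtnNdvd // andbF.
Qed.

Lemma nthS_prime j : prime (nth_prime j.+1).
Proof. exact: nth_prime_prime (ltn0Sn j). Qed.

Lemma nthS_pow_gt0 j e : (0 < nth_prime j.+1 ^ e)%N.
Proof. by rewrite expn_gt0 prime_gt0 ?nthS_prime. Qed.

Lemma prod_nth_gt0 N (e : nat -> nat) : (0 < \prod_(j < N) nth_prime j.+1 ^ e j)%N.
Proof. by apply/prodn_gt0 => j; apply: nthS_pow_gt0. Qed.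

Lemma logn_prodP q N (e : nat -> nat) :
  logn q (\prod_(j < N) nth_prime j.+1 ^ e j)%N = (\sum_(j < N) e j * (q == nth_prime j.+1))%N.
Proof.
elim: N => [|N IH]; first by rewrite !big_ord0 logn1.
have pp := nth_prime_prime (ltn0Sn N).
rewrite !big_ord_recr /= lognM ?IH ?lognX ?logn_prime //.
  exact: prod_nth_gt0.
exact: nthS_pow_gt0.
Qed.

Lemma prime_decomp_nth m N : (0 < m)%N -> (m <= N)%N ->
  (\prod_(j < N) nth_prime j.+1 ^ logn (nth_prime j.+1) m)%N = m.
Proof.
move=> m0 mN; apply: eqn_from_log => //.
  by apply/prodn_gt0 => j; rewrite expn_gt0 prime_gt0 // nth_prime_prime.
move=> q; rewrite (logn_prodP q N (fun j => logn (nth_prime j.+1) m)).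
case qp: (prime q); last first.
  rewrite big1; last first.
    move=> j _; case: eqP => [e|]; last by rewrite muln0.
    by move: qp; rewrite e nthS_prime.
  by rewrite lognE qp.
have [i [i0 ei]] := nth_prime_onto qp.
case: (leqP i N) => iN.
  have hk : (i.-1 < N)%N by lia.
  rewrite (bigD1 (Ordinal hk)) // big1.
    change (logn (nth_prime i.-1.+1) m * (q == nth_prime i.-1.+1) + 0 = logn q m)%N.
    by rewrite addn0 prednK // ei eqxx muln1.
  move=> j; rewrite andTb => /eqP hj; case: eqP => [e|]; last by rewrite muln0.
  exfalso; apply: hj; apply: val_inj => /=.
  by move: e; rewrite -ei => /nth_prime_inj; lia.
rewrite big1.
  rewrite logn_small // -ei.
  have := nth_prime_ge i; lia.
move=> j _; case: eqP => [e|]; last by rewrite muln0.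
by move: e; rewrite -ei => /nth_prime_inj => e; have := ltn_ord j; lia.
Qed.

Definition G (R : realType) (a b : nat -> R[i]) (N m n : nat) : R[i] :=
  \prod_(j < N) (a j.+1 ^+ logn (nth_prime j.+1) m * b j.+1 ^+ logn (nth_prime j.+1) n).

Arguments G {R}.

Definition chiab (R : realType) (a b : nat -> R[i]) (x : nat * nat) : R[i] :=
  G a b (x.1 + x.2) x.1 x.2.
Arguments chiab {R}.

Lemma G_stable (R : realType) (a b : nat -> R[i]) N m n :
  (m + n <= N)%N -> G a b N m n = G a b (m + n) m n.
Proof.
move=> h; have -> : N = (m + n + (N - (m + n)))%N by lia.
elim: (N - (m + n))%N => [|d IH]; first by rewrite addn0.
rewrite addnS /G big_ord_recr /= -/(G a b _ m n) IH.
have hP : ((m + n + d).+1 <= next_prime (nth_prime (m + n + d)))%N := nth_prime_ge _.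
rewrite !logn_small ?expr0 ?mulr1 //; lia.
Qed.

Lemma G_mul (R : realType) (a b : nat -> R[i]) N m m' n n' :
  (0 < m)%N -> (0 < m')%N -> (0 < n)%N -> (0 < n')%N ->
  G a b N (m * m') (n * n') = G a b N m n * G a b N m' n'.
Proof.
move=> h1 h2 h3 h4; rewrite /G -big_split; apply: eq_bigr => j _ /=.
by rewrite !lognM // !exprD mulrACA.
Qed.

Lemma chiab_mul (R : realType) (a b : nat -> R[i]) x y : posN2 x -> posN2 y ->
  chiab a b (mulN2 x y) = chiab a b x * chiab a b y.
Proof.
case: x => m n; case: y => m' n' [/= h1 h3] [/= h2 h4].
rewrite /chiab /mulN2 /=.
set K := (m * m' + n * n' + (m + n) + (m' + n'))%N.
rewrite -(@G_stable _ _ _ K (m * m')) ?G_mul //; last by rewrite /K; lia.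
by rewrite -(@G_stable _ _ _ K m) -?(@G_stable _ _ _ K m') // /K; lia.
Qed.

Lemma G_one (R : realType) (a b : nat -> R[i]) N : G a b N 1 1 = 1.
Proof. by rewrite /G big1 // => j _; rewrite logn1 !expr0 mulr1. Qed.

Lemma G_at1 (R : realType) (a b : nat -> R[i]) i : (0 < i)%N ->
  G a b (nth_prime i + 1) (nth_prime i) 1 = a i.
Proof.
move=> i0; have hk : (i.-1 < nth_prime i + 1)%N by have := nth_prime_ge i; lia.
have pi := nth_prime_prime i0.
rewrite /G (bigD1 (Ordinal hk)) // big1.
  change (a i.-1.+1 ^+ logn (nth_prime i.-1.+1) (nth_prime i) *
          b i.-1.+1 ^+ logn (nth_prime i.-1.+1) 1 * 1 = a i).
  by rewrite prednK // logn1 logn_prime // eqxx expr1 expr0 !mulr1.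
move=> j; rewrite andTb => /eqP hj.
rewrite logn1 logn_prime // expr0 mulr1.
case: eqP => [e|]; last by rewrite expr0.
exfalso; apply: hj; apply: val_inj => /=.
by move: e => /nth_prime_inj; lia.
Qed.

Lemma G_at2 (R : realType) (a b : nat -> R[i]) i : (0 < i)%N ->
  G a b (1 + nth_prime i) 1 (nth_prime i) = b i.
Proof.
move=> i0; have hk : (i.-1 < 1 + nth_prime i)%N by have := nth_prime_ge i; lia.
have pi := nth_prime_prime i0.
rewrite /G (bigD1 (Ordinal hk)) // big1.
  change (a i.-1.+1 ^+ logn (nth_prime i.-1.+1) 1 *
          b i.-1.+1 ^+ logn (nth_prime i.-1.+1) (nth_prime i) * 1 = b i).
  by rewrite prednK // logn1 logn_prime // eqxx expr1 expr0 mul1r mulr1.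
move=> j; rewrite andTb => /eqP hj.
rewrite logn1 logn_prime // expr0 mul1r.
case: eqP => [e|]; last by rewrite expr0.
exfalso; apply: hj; apply: val_inj => /=.
by move: e => /nth_prime_inj; lia.
Qed.

Lemma chiab_bound (R : realType) (omega : nat * nat -> R) (r s : nat -> R)
  (a b : nat -> R[i]) :
  (forall i, (0 < i)%N -> 0 < r i) ->
  (forall i, (0 < i)%N -> 0 < s i) ->
  (forall (k : nat) (idx : 'I_k -> nat) (al be : 'I_k -> nat),
      (0 < k)%N -> injective idx -> (forall j, (0 < idx j)%N) ->
      (\prod_(j < k) (r (idx j) ^+ al j * s (idx j) ^+ be j))%R
        <= omega (\prod_(j < k) nth_prime (idx j) ^ al j,
                  \prod_(j < k) nth_prime (idx j) ^ be j)%N) ->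
  (forall i, (0 < i)%N -> `|a i| <= (r i)%:C%C) ->
  (forall i, (0 < i)%N -> `|b i| <= (s i)%:C%C) ->
  forall x, posN2 x -> `|chiab a b x| <= (omega x)%:C%C.
Proof.
move=> r0 s0 H ha hb [m n] [/= m0 n0].
have k0 : (0 < m + n)%N by lia.
have Hk := H (m + n)%N (fun j : 'I_(m + n) => (nat_of_ord j).+1)
  (fun j : 'I_(m + n) => logn (nth_prime j.+1) m)
  (fun j : 'I_(m + n) => logn (nth_prime j.+1) n) k0.
have inj : injective (fun j : 'I_(m + n) => (nat_of_ord j).+1).
  by move=> j1 j2 [] e; apply: val_inj.
move: {Hk}(Hk inj (fun j => ltn0Sn _)).
rewrite !prime_decomp_nth //; try lia.
move=> Hk.
rewrite /chiab /G normr_prod.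
apply: (le_trans (y := \prod_(j < m + n) ((r j.+1)%:C%C ^+ logn (nth_prime j.+1) m *
           (s j.+1)%:C%C ^+ logn (nth_prime j.+1) n))).
  apply: ler_prod => j _; rewrite normrM !normrX; apply/andP; split.
    by rewrite mulr_ge0 // exprn_ge0.
  apply: ler_pM; rewrite ?exprn_ge0 //.
    by apply: lerXn2r; rewrite ?ha ?nnegrE //; apply: le_trans (ha _ _).
  by apply: lerXn2r; rewrite ?hb ?nnegrE //; apply: le_trans (hb _ _).
rewrite -lecR in Hk; apply: le_trans Hk.
rewrite rmorph_prod le_eqVlt; apply/orP; left; apply/eqP/eq_bigr => j _; by rewrite rmorphM !rmorphXn.
Qed.

Lemma root_bound (R : realType) (t : R) (w : nat -> R) :
  0 <= t -> (forall n, (0 < n)%N -> t ^+ n <= w n) ->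
  t <= inf [set w n `^ (n%:R)^-1 | n in [set n : nat | (0 < n)%N]].
Proof.
move=> t0 H; apply: lb_le_inf.
  by exists (w 1%N `^ (1%:R)^-1); exists 1%N.
move=> y [n /= n0 <-].
have -> : t = (t ^+ n) `^ (n%:R)^-1.
  rewrite -powR_mulrn // -powRrM divff ?powRr1 //.
  by rewrite pnatr_eq0 -lt0n.
apply: ge0_ler_powR; rewrite ?nnegrE ?invr_ge0 ?ler0n ?exprn_ge0 //; last exact: H.
exact: le_trans (exprn_ge0 _ t0) (H n n0).
Qed.

Lemma chi_pow (R : realType) (chi : nat * nat -> R[i]) p (hp : (0 < p)%N) :
  (forall x y, posN2 x -> posN2 y -> chi (mulN2 x y) = chi x * chi y) ->
  forall n, (0 < n)%N -> chi (p ^ n, 1)%N = chi (p, 1)%N ^+ n /\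
                         chi (1, p ^ n)%N = chi (1, p)%N ^+ n.
Proof.
move=> hm; elim=> // -[|n] IH _; first by rewrite !expn1 !expr1.
have [e1 e2] := IH (ltn0Sn _).
have pn : (0 < p ^ n.+1)%N by rewrite expn_gt0 hp.
split.
- have -> : (p ^ n.+2, 1)%N = mulN2 (p ^ n.+1, 1)%N (p, 1)%N by rewrite /mulN2 /= expnSr.
  by rewrite hm ?e1 ?exprSr //; split.
- have -> : (1, p ^ n.+2)%N = mulN2 (1, p ^ n.+1)%N (1, p)%N by rewrite /mulN2 /= expnSr.
  by rewrite hm ?e2 ?exprSr //; split.
Qed.

Lemma second_incl (R : realType) (omega : nat * nat -> R) :
  Delta omega `<=` polydisc_pair (rho omega) (mu omega).
Proof.
move=> [a b] [chi [[_ hm] hb h1 h2]]; split => i i0 /=.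
- move: (h1 i i0) => /= ->; rewrite normc_def lecR.
  have pp : (0 < nth_prime i)%N by rewrite prime_gt0 // nth_prime_prime.
  apply: root_bound; first exact: sqrtr_ge0.
  move=> n n0; have [e _] := @chi_pow R chi _ pp hm n n0.
  have := hb (nth_prime i ^ n, 1)%N; rewrite /posN2 /= expn_gt0 pp => /(_ (conj isT isT)).
  by rewrite e normrX normc_def -rmorphXn lecR.
- move: (h2 i i0) => /= ->; rewrite normc_def lecR.
  have pp : (0 < nth_prime i)%N by rewrite prime_gt0 // nth_prime_prime.
  apply: root_bound; first exact: sqrtr_ge0.
  move=> n n0; have [_ e] := @chi_pow R chi _ pp hm n n0.
  have := hb (1, nth_prime i ^ n)%N; rewrite /posN2 /= expn_gt0 pp => /(_ (conj isT isT)).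
  by rewrite e normrX normc_def -rmorphXn lecR.
Qed.

Theorem mainTheorem5 (R : realType) (omega : nat * nat -> R) (r s : nat -> R) :
  is_weight omega ->
  (forall i, (0 < i)%N -> 0 < r i) ->
  (forall i, (0 < i)%N -> 0 < s i) ->
  (forall (k : nat) (idx : 'I_k -> nat) (al be : 'I_k -> nat),
      (0 < k)%N -> injective idx -> (forall j, (0 < idx j)%N) ->
      (\prod_(j < k) (r (idx j) ^+ al j * s (idx j) ^+ be j))%R
        <= omega (\prod_(j < k) nth_prime (idx j) ^ al j,
                  \prod_(j < k) nth_prime (idx j) ^ be j)%N) ->
  polydisc_pair r s `<=` Delta omega /\
  Delta omega `<=` polydisc_pair (rho omega) (mu omega).

Proof.
move=> hw r0 s0 H; split; last exact: second_incl.
move=> [a b] [/= ha hb].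
exists (chiab a b); split.
- split; last exact: chiab_mul.
  exists (1, 1)%N; split; first by split.
  by rewrite /chiab G_one oner_neq0.
- exact: chiab_bound r0 s0 H ha hb.
- by move=> i i0 /=; rewrite /chiab /= G_at1.
- by move=> i i0 /=; rewrite /chiab /= G_at2.
Qed.
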